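(* Let $N\ge2$, let $\alpha(N)$ be given by $\alpha(2)=2\pi$ and $\alpha(N)=N(N-2)\frac{\pi^{N/2}}{\Gamma(N/2+1)}$ for $N\ge3$, let $K>0$ and $C$, $\alpha$ be real constants, and put $\epsilon^*=\frac{\alpha(N)e^C}{4}$. Let $a(t)$ be a nonvanishing function and let $\Phi(s)$ be a $C^2$ function on an interval $I\ni0$ satisfying \[ s\ddot\Phi(s)+\dot\Phi(s)-\epsilon^*e^{-\Phi(s)/K}=0\ \text{on } I,\qquad \Phi(0)=\alpha,\quad \dot\Phi(0)=\epsilon^*e^{-\alpha/K}. \] Then, with $s=\frac{x_1^2+x_2^2}{a(t)}\in I$, the density \[ \rho(t,\vec x)=\frac{1}{a(t)}\exp\!\Big(-\frac{\Phi(s)}{K}+C\Big) \] and the potential $\Phi(t,\vec x)=\Phi\big(\frac{x_1^2+x_2^2}{a(t)}\big)$ satisfy the Poisson equation $\Delta\Phi(t,\vec x)=\alpha(N)\rho(t,\vec x)$ in $\mathbb{R}^N$ (the Laplacian taken in $\vec x$).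
   Context: $\Gamma$ is the Gamma function; $\dot\Phi=d\Phi/ds$. *)

(* Defs.v *)
From Stdlib Require Import Reals Lra.
From Coquelicot Require Import Coquelicot.
Open Scope R_scope.

Definition Gamma (z : R) : R :=
  RInt_gen (fun t => Rpower t (z - 1) * exp (- t))
           (at_right 0) (Rbar_locally p_infty).

Definition alphaN (N : nat) : R :=
  if (N =? 2)%nat then 2 * PI
  else INR N * (INR N - 2) * Rpower PI (INR N / 2) / Gamma (INR N / 2 + 1).

(* Points of R^N are represented as x : nat -> R; only the coordinates
   x 0, ..., x (N-1) are used (x 0 = x_1, x 1 = x_2). *)
Definition upd (x : nat -> R) (i : nat) (h : R) : nat -> R :=
  fun j => if (j =? i)%nat then h else x j.

Definition partial (i : nat) (f : (nat -> R) -> R) (x : nat -> R) : R :=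
  Derive (fun h => f (upd x i h)) (x i).

Definition laplacian (N : nat) (f : (nat -> R) -> R) (x : nat -> R) : R :=
  sum_f_R0 (fun i => partial i (partial i f) x) (N - 1).

(* Main.v *)
Require Import Defs.
From Stdlib Require Import Reals Lra Lia.
From Coquelicot Require Import Coquelicot.
Open Scope R_scope.

Section S.
Variables (Phi : R -> R) (lo hi : Rbar) (A c : R).
Hypothesis HA : A <> 0.
Hypothesis HC2 : forall s, Rbar_lt lo (Finite s) -> Rbar_lt (Finite s) hi ->
           ex_derive Phi s /\ ex_derive (Derive Phi) s.
Let q := fun h : R => (h^2 + c) / A.

Lemma q_der h : is_derive q h (2 * h / A).
Proof. unfold q. auto_derive; [auto| field; auto]. Qed.

Lemma q_loc h0 : Rbar_lt lo (q h0) -> Rbar_lt (q h0) hi ->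
  locally h0 (fun h => Rbar_lt lo (q h) /\ Rbar_lt (q h) hi).
Proof.
intros H1 H2.
assert (L : locally (q h0) (fun u => Rbar_lt lo u /\ Rbar_lt u hi)).
{ apply filter_and. apply (open_Rbar_gt' (Finite (q h0)) lo H1).
  apply (open_Rbar_lt' (Finite (q h0)) hi H2). }
assert (Hc : continuous q h0).
{ apply (ex_derive_continuous (V:=R_NormedModule)). eexists; apply q_der. }
exact (Hc _ L).
Qed.

Lemma d1 h : Rbar_lt lo (q h) -> Rbar_lt (q h) hi ->
  is_derive (fun h => Phi (q h)) h (Derive Phi (q h) * (2 * h / A)).
Proof.
intros H1 H2. destruct (HC2 _ H1 H2) as [E _].
rewrite Rmult_comm. apply (is_derive_comp (V:=R_NormedModule) Phi q). apply Derive_correct, E. apply q_der.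
Qed.

Lemma d2 h0 : Rbar_lt lo (q h0) -> Rbar_lt (q h0) hi ->
  is_derive (fun h => Derive (fun h' => Phi (q h')) h) h0
   (Derive (Derive Phi) (q h0) * (2 * h0 / A) * (2*h0/A) + Derive Phi (q h0) * (2/A)).
Proof.
intros H1 H2.
apply is_derive_ext_loc with (f := fun h => Derive Phi (q h) * (2 * h / A)).
{ apply filter_imp with (2 := q_loc h0 H1 H2). intros h [G1 G2].
  symmetry; apply is_derive_unique, d1; auto. }
destruct (HC2 _ H1 H2) as [_ E].
replace (Derive (Derive Phi) (q h0) * (2 * h0 / A) * (2 * h0 / A) + Derive Phi (q h0) * (2 / A))
 with ((Derive (Derive Phi) (q h0) * (2 * h0 / A)) * (2 * h0 / A) + Derive Phi (q h0) * (2 / A)) by ring.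
apply (is_derive_mult (fun h => Derive Phi (q h)) (fun h => 2*h/A)).
 rewrite Rmult_comm. apply (is_derive_comp (V:=R_NormedModule) (Derive Phi) q). apply Derive_correct, E. apply q_der.
 auto_derive; auto. field; auto.
 intros; apply Rmult_comm.
Qed.
End S.

Lemma sum_two (f : nat -> R) m : (1 <= m)%nat -> (forall i, (2 <= i)%nat -> f i = 0) ->
  sum_f_R0 f m = f 0%nat + f 1%nat.
Proof.
intros Hm Hf. induction m as [|m IH]. lia.
destruct m. simpl. reflexivity.
change (sum_f_R0 f (S (S m))) with (sum_f_R0 f (S m) + f (S (S m))). rewrite IH by lia. rewrite (Hf (S (S m))) by lia. ring.
Qed.

Lemma partial_big (i : nat) (P : R -> R) (A : R) y : (2 <= i)%nat ->
  partial i (fun y : nat -> R => P ((y 0%nat ^ 2 + y 1%nat ^ 2) / A)) y = 0.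
Proof.
intros Hi. unfold partial, upd.
destruct i as [|[|i]]; try lia. simpl.
apply Derive_const.
Qed.

Theorem lemma3
  (N : nat) (HN : (2 <= N)%nat)
  (K C al : R) (HK : 0 < K)
  (a : R -> R) (Ha : forall t, a t <> 0)
  (Phi : R -> R) (lo hi : Rbar)
  (Hlo : Rbar_lt lo (Finite 0)) (Hhi : Rbar_lt (Finite 0) hi)
  (HC2 : forall s, Rbar_lt lo (Finite s) -> Rbar_lt (Finite s) hi ->
           ex_derive Phi s /\ ex_derive (Derive Phi) s /\
           continuous (Derive_n Phi 2) s)
  (Hode : forall s, Rbar_lt lo (Finite s) -> Rbar_lt (Finite s) hi ->
           s * Derive_n Phi 2 s + Derive Phi s
             - (alphaN N * exp C / 4) * exp (- Phi s / K) = 0)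
  (H0 : Phi 0 = al)
  (H1 : Derive Phi 0 = (alphaN N * exp C / 4) * exp (- al / K)) :
  forall (t : R) (x : nat -> R),
    Rbar_lt lo (Finite ((x 0%nat ^ 2 + x 1%nat ^ 2) / a t)) ->
    Rbar_lt (Finite ((x 0%nat ^ 2 + x 1%nat ^ 2) / a t)) hi ->
    let PhiTX := fun y : nat -> R => Phi ((y 0%nat ^ 2 + y 1%nat ^ 2) / a t) in
    let rho := / a t * exp (- Phi ((x 0%nat ^ 2 + x 1%nat ^ 2) / a t) / K + C) in
    (forall i, (i < N)%nat ->
       ex_derive (fun h => partial i PhiTX (upd x i h)) (x i)) /\
    laplacian N PhiTX x = alphaN N * rho.
Proof.
intros t x Hl Hh PhiTX rho.
assert (HA := Ha t). set (A := a t) in *.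
assert (HC2' : forall s, Rbar_lt lo (Finite s) -> Rbar_lt (Finite s) hi ->
           ex_derive Phi s /\ ex_derive (Derive Phi) s).
{ intros s a1 a2; destruct (HC2 s a1 a2) as [? [? _]]; auto. }
set (c0 := x 1%nat ^ 2). set (c1 := x 0%nat ^ 2).
assert (E0 : forall h, partial 0 PhiTX (upd x 0 h) = Derive (fun h' => Phi ((h'^2 + c0)/A)) h).
{ intros h. unfold partial, PhiTX, upd. simpl. reflexivity. }
assert (E1 : forall h, partial 1 PhiTX (upd x 1 h) = Derive (fun h' => Phi ((h'^2 + c1)/A)) h).
{ intros h. unfold partial, PhiTX, upd. simpl. apply Derive_ext. intros; rewrite Rplus_comm; reflexivity. }
assert (Hl1 : Rbar_lt lo ((x 1%nat ^ 2 + c1) / A)) by (unfold c1; rewrite Rplus_comm; exact Hl).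
assert (Hh1 : Rbar_lt ((x 1%nat ^ 2 + c1) / A) hi) by (unfold c1; rewrite Rplus_comm; exact Hh).
pose proof (d2 Phi lo hi A c0 HA HC2' (x 0%nat) Hl Hh) as D0.
pose proof (d2 Phi lo hi A c1 HA HC2' (x 1%nat) Hl1 Hh1) as D1.
split.
- intros i Hi. destruct i as [|[|i]].
  + eapply ex_derive_ext. intros; symmetry; apply E0. eexists; exact D0.
  + eapply ex_derive_ext. intros; symmetry; apply E1. eexists; exact D1.
  + eapply ex_derive_ext. intros; symmetry; apply partial_big; lia. apply ex_derive_const.
- unfold laplacian. rewrite sum_two; [|lia|].
  2: { intros i Hi. unfold partial at 1. erewrite Derive_ext. apply Derive_const.
       intros; apply partial_big; auto. }
  cbv beta in D0, D1.
  assert (L0 : partial 0 (partial 0 PhiTX) x =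
     Derive (Derive Phi) ((x 0%nat ^ 2 + c0) / A) * (2 * x 0%nat / A) * (2 * x 0%nat / A) +
     Derive Phi ((x 0%nat ^ 2 + c0) / A) * (2 / A)).
  { transitivity (Derive (fun h => Derive (fun h' => Phi ((h'^2 + c0)/A)) h) (x 0%nat)).
    apply Derive_ext; apply E0. apply is_derive_unique; exact D0. }
  assert (L1 : partial 1 (partial 1 PhiTX) x =
     Derive (Derive Phi) ((x 1%nat ^ 2 + c1) / A) * (2 * x 1%nat / A) * (2 * x 1%nat / A) +
     Derive Phi ((x 1%nat ^ 2 + c1) / A) * (2 / A)).
  { transitivity (Derive (fun h => Derive (fun h' => Phi ((h'^2 + c1)/A)) h) (x 1%nat)).
    apply Derive_ext; apply E1. apply is_derive_unique; exact D1. }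
  rewrite L0, L1.
  replace ((x 1%nat ^ 2 + c1) / A) with ((x 0%nat ^ 2 + c0) / A) by (unfold c0, c1; f_equal; ring).
  set (s := (x 0%nat ^ 2 + c0) / A) in *.
  pose proof (Hode s Hl Hh) as Ho. simpl in Ho.
  unfold rho. fold c0 c1. fold s.
  rewrite exp_plus.
  replace ((c1 + c0) / A) with s by (unfold s; f_equal; ring).
  change (s * Derive (Derive Phi) s + Derive Phi s - alphaN N * exp C / 4 * exp (- Phi s / K) = 0) in Ho.
  assert (Ho' : s * Derive (Derive Phi) s + Derive Phi s = alphaN N * exp C / 4 * exp (- Phi s / K)) by lra.
  transitivity (4 / A * (s * Derive (Derive Phi) s + Derive Phi s)).
  { unfold s, c0, c1. field. auto. }
  rewrite Ho'. field. auto.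
Qed.
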